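(* For any pure state $\ket\Psi\in\mathcal H_A\otimes\mathcal H_B\otimes\mathcal H_C$ (finite-dimensional), $G(A:B:C)_{\ket\Psi}\le S_0(A)+S_2(B)$, where $S_0(A)=\log\operatorname{rank}\rho_A$ and $S_2(B)=-\log\operatorname{tr}\rho_B^2$, with $\rho_A,\rho_B$ the reduced density matrices of $\ket\Psi$.
   Context: For a subsystem $X$ and $\pi\in S_n$, $\pi_X$ permutes the $n$ copies of $\mathcal H_X$ according to $\pi$ and acts trivially otherwise. $\pi^{(1)}=(12)(34)$, $\pi^{(2)}=(13)(24)$, $\pi^{(3)}=(14)(23)\in S_4$; $Z(A:B:C)_{\ket\Psi}=\bra\Psi^{\otimes4}(\pi^{(1)}_A\otimes\pi^{(2)}_B\otimes\pi^{(3)}_C)\ket\Psi^{\otimes4}$ (a positive real number) and $G(A:B:C)_{\ket\Psi}=-\tfrac12\log Z(A:B:C)_{\ket\Psi}$. *)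

(* Defs.v *)
From HB Require Import structures.
From mathcomp Require Import all_boot all_order all_algebra all_fingroup.
From mathcomp Require Import all_classical all_reals all_analysis.
From mathcomp Require Import complex.
Set Implicit Arguments. Unset Strict Implicit. Unset Printing Implicit Defensive.
Import Order.TTheory GRing.Theory Num.Theory.
Local Open Scope ring_scope.

Section Tripartite.
Variables (R : realType) (dA dB dC : nat).

(* A (pure) state |Psi> in H_A (x) H_B (x) H_C, with H_X = C^dX, given by its
   coefficients Psi a b c = <a b c | Psi>. *)
Definition state := 'I_dA -> 'I_dB -> 'I_dC -> R[i].

Definition normalized (Psi : state) : Prop :=
  \sum_(a : 'I_dA) \sum_(b : 'I_dB) \sum_(c : 'I_dC) Psi a b c * conjc (Psi a b c) = 1.

Definition rhoA (Psi : state) : 'M[R[i]]_dA :=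
  \matrix_(a, a') \sum_(b : 'I_dB) \sum_(c : 'I_dC) Psi a b c * conjc (Psi a' b c).
Definition rhoB (Psi : state) : 'M[R[i]]_dB :=
  \matrix_(b, b') \sum_(a : 'I_dA) \sum_(c : 'I_dC) Psi a b c * conjc (Psi a b' c).

Definition S0A (Psi : state) : R := ln ((\rank (rhoA Psi))%:R).
(* tr rho_B^2 is real; we take its real part to feed it to ln. *)
Definition S2B (Psi : state) : R := - ln (complex.Re (\tr (rhoB Psi *m rhoB Psi))).

(* <Psi^{(x)4}| pA_A (x) pB_B (x) pC_C |Psi^{(x)4}>, where pi_X sends the basis
   vector |x_1 x_2 x_3 x_4> of H_X^{(x)4} to |x_{pi^-1 1} ... x_{pi^-1 4}>.
   Its matrix element <x|pi_X|y> is 1 iff y = x o pi, whence the formula. *)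
Definition Zperm (pA pB pC : {perm 'I_4}) (Psi : state) : R[i] :=
  \sum_(a : {ffun 'I_4 -> 'I_dA}) \sum_(b : {ffun 'I_4 -> 'I_dB})
   \sum_(c : {ffun 'I_4 -> 'I_dC})
     \prod_(i < 4) (conjc (Psi (a i) (b i) (c i)) *
                    Psi (a (pA i)) (b (pB i)) (c (pC i))).

End Tripartite.

Definition o4 (k : nat) (H : (k < 4)%N) : 'I_4 := Ordinal H.
Arguments o4 k H : clear implicits.
(* pi^(1) = (12)(34), pi^(2) = (13)(24), pi^(3) = (14)(23), with copies 1..4
   numbered 0..3. *)
Definition pi1 : {perm 'I_4} := tperm (o4 0%N isT) (o4 1%N isT) * tperm (o4 2%N isT) (o4 3%N isT).
Definition pi2 : {perm 'I_4} := tperm (o4 0%N isT) (o4 2%N isT) * tperm (o4 1%N isT) (o4 3%N isT).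
Definition pi3 : {perm 'I_4} := tperm (o4 0%N isT) (o4 3%N isT) * tperm (o4 1%N isT) (o4 2%N isT).

Definition Z (R : realType) (dA dB dC : nat) (Psi : state R dA dB dC) : R[i] :=
  Zperm pi1 pi2 pi3 Psi.

(* G(A:B:C) = -1/2 log Z; Z is a positive real number, so we take its real part. *)
Definition G (R : realType) (dA dB dC : nat) (Psi : state R dA dB dC) : R :=
  - (1 / 2) * ln (complex.Re (Z Psi)).

(* Main.v *)
Require Import Defs.
From mathcomp Require Import all_boot all_order all_algebra all_fingroup.
From mathcomp Require Import all_classical all_reals all_analysis.
From mathcomp Require Import complex.
Import Order.TTheory GRing.Theory Num.Theory.
Local Open Scope ring_scope.
From mathcomp Require Import sesquilinear spectral ring lra.

Section SB.
Local Open Scope sesquilinear_scope.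


Variable C : numClosedFieldType.


Lemma cs_real (r : nat) (x : 'I_r -> C) : (forall i, x i \is Num.real) ->
  (\sum_i x i) ^+ 2 <= r%:R * \sum_i x i ^+ 2.
Proof.
move=> Hx.
have H2 : forall i j, x i * x j *+ 2 <= x i ^+ 2 + x j ^+ 2.
  move=> i j; rewrite -subr_ge0.
  have -> : x i ^+ 2 + x j ^+ 2 - x i * x j *+ 2 = (x i - x j) ^+ 2.
    by rewrite sqrrB addrAC.
  by apply: real_exprn_even_ge0 => //; rewrite rpredB.
have E1 : (\sum_i x i) ^+ 2 = \sum_i \sum_j x i * x j.
  by rewrite expr2 big_distrl /=; apply: eq_bigr => i _; rewrite big_distrr.
have E2 : \sum_(i < r) \sum_(j < r) (x i ^+ 2 + x j ^+ 2) = (r%:R * \sum_i x i ^+ 2) *+ 2.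
  under eq_bigr => i _ do rewrite big_split /= sumr_const card_ord.
  rewrite big_split /= sumr_const card_ord sumrMnl -mulr_natl.
  rewrite -[X in X + _]mulr_natl -[X in _ + X]mulr_natl -mulr2n.
  exact: (esym (mulr_natl _ 2)).
rewrite -(@ler_pMn2r _ 2) // -E2 E1 -sumrMnl; apply: ler_sum => i _.
rewrite -sumrMnl; apply: ler_sum => j _; exact: H2.
Qed.

Lemma tmul (m n p : nat) (A : 'M[C]_(m, n)) (B : 'M[C]_(n, p)) :
  (A *m B)^t* = B^t* *m A^t*.
Proof. by rewrite trmx_mul map_mxM. Qed.

Lemma ML (m n : nat) (V : 'M[C]_(m, n)) :
  (\tr (V *m V^t*)) ^+ 2 <= (\rank V)%:R * \tr ((V *m V^t*) *m (V *m V^t*)).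
Proof.
have rn : (\rank V <= n)%N := rank_leq_col V.
set S := schmidt (row_base V).
have Su : S \is unitarymx := schmidt_unitarymx _ rn.
have VS : (V <= S)%MS.
  by rewrite /S (eqmx_schmidt_free (row_base_free V)) eq_row_base.
have VE : V = (V *m S^t*) *m S.
  have [D DE] := submxP VS.
  by rewrite [X in X *m _ *m _]DE -!mulmxA (mulmxA S) (unitarymxP Su) mul1mx -DE.
set a := V *m S^t* in VE.
have HE : V *m V^t* = a *m a^t*.
  by rewrite {1 2}VE tmul -!mulmxA (mulmxA S) (unitarymxP Su) mul1mx.
rewrite HE.
have T1 : \tr (a *m a^t*) = \tr (a^t* *m a) by rewrite mxtrace_mulC.
have T2 : \tr (a *m a^t* *m (a *m a^t*)) = \tr ((a^t* *m a) *m (a^t* *m a)).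
  by rewrite mulmxA mxtrace_mulC !mulmxA.
rewrite T1 T2.
set K := a^t* *m a.
have Kij : forall i j, K i j = \sum_p (a p i)^* * a p j.
  by move=> i j; rewrite !mxE; apply: eq_bigr => p _; rewrite !mxE.
have Kji : forall i j, K j i = (K i j)^*.
  move=> i j; rewrite !Kij rmorph_sum; apply: eq_bigr => p _.
  by rewrite rmorphM /= conjCK mulrC.
have Kii : forall i, 0 <= K i i.
  by move=> i; rewrite Kij; apply: sumr_ge0 => p _; rewrite mulrC mul_conjC_ge0.
have trK : \tr K = \sum_i K i i by rewrite /mxtrace.
have trKK : \tr (K *m K) = \sum_i \sum_l K i l * K l i.
  by rewrite /mxtrace; apply: eq_bigr => i _; rewrite mxE.
rewrite trK trKK.
apply: (le_trans (@cs_real _ (fun i => K i i) (fun i => ger0_real (Kii i)))).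
apply: ler_wpM2l; first exact: ler0n.
apply: ler_sum => i _; rewrite (bigD1 i) //= -[X in X <= _]addr0 expr2.
apply: lerD => //; apply: sumr_ge0 => l _; rewrite [K l i]Kji; exact: mul_conjC_ge0.
Qed.

Lemma trHH_ge0 (m n : nat) (V : 'M[C]_(m, n)) :
  0 <= \tr ((V *m V^t*) *m (V *m V^t*)).
Proof.
set H := V *m V^t*.
have Hji : forall i j, H j i = (H i j)^*.
  move=> i j; rewrite !mxE rmorph_sum; apply: eq_bigr => p _.
  by rewrite !mxE rmorphM /= conjCK mulrC.
rewrite /mxtrace; apply: sumr_ge0 => i _; rewrite mxE; apply: sumr_ge0 => l _.
by rewrite [H l i]Hji mul_conjC_ge0.
Qed.

Lemma trH_eq (m n : nat) (V : 'M[C]_(m, n)) :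
  \tr (V *m V^t*) = \sum_i \sum_j V i j * (V i j)^*.
Proof. by rewrite /mxtrace; apply: eq_bigr => i _; rewrite mxE; apply: eq_bigr => j _; rewrite !mxE. Qed.

Lemma MMt0 (m n : nat) (M : 'M[C]_(m, n)) : M *m M^t* = 0 -> M = 0.
Proof.
move=> H; apply/matrixP => i j; rewrite mxE.
have : (M *m M^t*) i i = 0 by rewrite H mxE.
rewrite mxE => /eqP; rewrite psumr_eq0; last first.
  by move=> k _; rewrite !mxE mul_conjC_ge0.
move=> /allP /(_ j (mem_index_enum _)) /implyP /(_ isT).
by rewrite !mxE mul_conjC_eq0 => /eqP.
Qed.

Lemma rank_MMt (m n : nat) (M : 'M[C]_(m, n)) : \rank (M *m M^t*) = \rank M.
Proof.
have := mxrank_mul_ker M (M^t*).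
set K := (M :&: kermx (M^t*))%MS.
suff -> : \rank K = 0%N by rewrite addn0.
apply/eqP; rewrite mxrank_eq0; apply/eqP; apply: MMt0.
have : (K <= M)%MS := capmxSl _ _.
case/submxP => D KE.
have K0 : K *m M^t* = 0 by apply/sub_kermxP; exact: capmxSr.
by rewrite {2}KE tmul mulmxA K0 mul0mx.
Qed.


End SB.

Definition mk4 {I : Type} (x0 x1 x2 x3 : I) : 'I_4 -> I :=
  fun i => if val i == 0%N then x0 else if val i == 1%N then x1
           else if val i == 2%N then x2 else x3.

Lemma sum_ffun4 (V : nmodType) (I : finType) (F : {ffun 'I_4 -> I} -> V) :
  \sum_f F f = \sum_x0 \sum_x1 \sum_x2 \sum_x3 F (finfun (mk4 x0 x1 x2 x3)).
Proof.
pose g (u : ((I * I) * I) * I) : {ffun 'I_4 -> I} :=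
  finfun (mk4 u.1.1.1 u.1.1.2 u.1.2 u.2).
pose h (f : {ffun 'I_4 -> I}) : ((I * I) * I) * I :=
  (f (o4 0 isT), f (o4 1 isT), f (o4 2 isT), f (o4 3 isT)).
have gh : cancel h g.
  move=> f; apply/ffunP => i; rewrite ffunE /mk4 /=.
  by case: i => [[|[|[|[|k]]]] Hk] //=; congr (f _); apply/val_inj.
have hg : cancel g h by case=> [[[x0 x1] x2] x3]; rewrite /h /g /= !ffunE.
rewrite (reindex g); last by exists h => x _; [exact: hg | exact: gh].
by rewrite !pair_bigA /=.
Qed.

Lemma prod4 (V : comPzSemiRingType) (f : 'I_4 -> V) :
  \prod_(i < 4) f i = f (o4 0 isT) * f (o4 1 isT) * f (o4 2 isT) * f (o4 3 isT).
Proof.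
rewrite !big_ord_recl big_ord0 mulr1 /= !mulrA.
by congr (f _ * f _ * f _ * f _); apply/val_inj.
Qed.

Lemma pi1_0 : pi1 (o4 0 isT) = o4 1 isT. Proof. by apply/val_inj; rewrite /pi1 permM /tperm !permE. Qed.
Lemma pi1_1 : pi1 (o4 1 isT) = o4 0 isT. Proof. by apply/val_inj; rewrite /pi1 permM /tperm !permE. Qed.
Lemma pi1_2 : pi1 (o4 2 isT) = o4 3 isT. Proof. by apply/val_inj; rewrite /pi1 permM /tperm !permE. Qed.
Lemma pi1_3 : pi1 (o4 3 isT) = o4 2 isT. Proof. by apply/val_inj; rewrite /pi1 permM /tperm !permE. Qed.
Lemma pi2_0 : pi2 (o4 0 isT) = o4 2 isT. Proof. by apply/val_inj; rewrite /pi2 permM /tperm !permE. Qed.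
Lemma pi2_1 : pi2 (o4 1 isT) = o4 3 isT. Proof. by apply/val_inj; rewrite /pi2 permM /tperm !permE. Qed.
Lemma pi2_2 : pi2 (o4 2 isT) = o4 0 isT. Proof. by apply/val_inj; rewrite /pi2 permM /tperm !permE. Qed.
Lemma pi2_3 : pi2 (o4 3 isT) = o4 1 isT. Proof. by apply/val_inj; rewrite /pi2 permM /tperm !permE. Qed.
Lemma pi3_0 : pi3 (o4 0 isT) = o4 3 isT. Proof. by apply/val_inj; rewrite /pi3 permM /tperm !permE. Qed.
Lemma pi3_1 : pi3 (o4 1 isT) = o4 2 isT. Proof. by apply/val_inj; rewrite /pi3 permM /tperm !permE. Qed.
Lemma pi3_2 : pi3 (o4 2 isT) = o4 1 isT. Proof. by apply/val_inj; rewrite /pi3 permM /tperm !permE. Qed.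
Lemma pi3_3 : pi3 (o4 3 isT) = o4 0 isT. Proof. by apply/val_inj; rewrite /pi3 permM /tperm !permE. Qed.

Section Main.
Variables (R : realType) (dA dB dC : nat) (Psi : state R dA dB dC).
Local Notation C := (R[i]).

Lemma Z_expand : Z Psi = \sum_a0 \sum_a1 \sum_a2 \sum_a3 \sum_b0 \sum_b1 \sum_b2 \sum_b3
   \sum_c0 \sum_c1 \sum_c2 \sum_c3
   ((conjc (Psi a0 b0 c0) * Psi a1 b2 c3) * (conjc (Psi a1 b1 c1) * Psi a0 b3 c2) *
    (conjc (Psi a2 b2 c2) * Psi a3 b0 c1) * (conjc (Psi a3 b3 c3) * Psi a2 b1 c0)).
Proof.
rewrite /Z /Zperm sum_ffun4; do 4 (apply: eq_bigr => ? _).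
rewrite sum_ffun4; do 4 (apply: eq_bigr => ? _).
rewrite sum_ffun4; do 4 (apply: eq_bigr => ? _).
rewrite prod4 !pi1_0 !pi1_1 !pi1_2 !pi1_3 !pi2_0 !pi2_1 !pi2_2 !pi2_3.
by rewrite !pi3_0 !pi3_1 !pi3_2 !pi3_3 !ffunE /mk4 /=.
Qed.

Local Open Scope sesquilinear_scope.

Lemma cjE (x : C) : x^* = conjc x. Proof. by []. Qed.

Definition Xf (jk : 'I_dA * 'I_dA) (cc : 'I_dC * 'I_dC) : C :=
  \sum_b conjc (Psi jk.1 b cc.1) * Psi jk.2 b cc.2.
Definition hf x y := \sum_cc Xf x cc * conjc (Xf y cc).
Definition Vm : 'M[C]_(#|{: 'I_dA * 'I_dA}|, #|{: 'I_dC * 'I_dC}|) :=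
  \matrix_(p, q) Xf (enum_val p) (enum_val q).

Lemma sum_ev (T : finType) (F : T -> C) :
  \sum_(i < #|{: T}|) F (enum_val i) = \sum_(x : T) F x.
Proof. by rewrite -(big_enum_val F). Qed.

Lemma sum_pair (I J : finType) (F : I * J -> C) :
  \sum_x F x = \sum_i \sum_j F (i, j).
Proof. by rewrite pair_bigA; apply: eq_bigr => -[]. Qed.

Lemma H_pq p q : (Vm *m Vm^t*) p q = hf (enum_val p) (enum_val q).
Proof.
rewrite mxE /hf -[RHS]sum_ev; apply: eq_bigr => k _; by rewrite !mxE.
Qed.

Lemma trHH : \tr ((Vm *m Vm^t*) *m (Vm *m Vm^t*)) =
  \sum_a0 \sum_a1 \sum_a2 \sum_a3 hf (a1, a2) (a3, a0) * hf (a3, a0) (a1, a2).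
Proof.
rewrite /mxtrace.
under eq_bigr => p _ do rewrite mxE.
under eq_bigr => p _ do under eq_bigr => q _ do rewrite !H_pq.
rewrite (@sum_ev _ (fun x => \sum_(q < _) hf x (enum_val q) * hf (enum_val q) x)).
under eq_bigr => x _ do rewrite (@sum_ev _ (fun y => hf x y * hf y x)) sum_pair.
rewrite sum_pair.
rewrite [RHS]exchange_big /=; apply: eq_bigr => a1 _.
rewrite [RHS]exchange_big /=; apply: eq_bigr => a2 _.
rewrite [RHS]exchange_big /=; apply: eq_bigr => a3 _.
by [].
Qed.

Lemma hf_expand x y : hf x y = \sum_c \sum_c' \sum_b \sum_b'
  (conjc (Psi x.1 b c) * Psi x.2 b c') * conjc (conjc (Psi y.1 b' c) * Psi y.2 b' c').
Proof.
rewrite /hf sum_pair; apply: eq_bigr => c _; apply: eq_bigr => c' _.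
by rewrite /Xf rmorph_sum big_distrlr.
Qed.

Lemma per_a a0 a1 a2 a3 :
  \sum_b0 \sum_b1 \sum_b2 \sum_b3 \sum_c0 \sum_c1 \sum_c2 \sum_c3
   ((conjc (Psi a0 b0 c0) * Psi a1 b2 c3) * (conjc (Psi a1 b1 c1) * Psi a0 b3 c2) *
    (conjc (Psi a2 b2 c2) * Psi a3 b0 c1) * (conjc (Psi a3 b3 c3) * Psi a2 b1 c0))
  = hf (a1, a2) (a3, a0) * hf (a3, a0) (a1, a2).
Proof.
rewrite !hf_expand !pair_bigA big_distrlr pair_bigA /=.
pose h (w : ((('I_dC * 'I_dC) * 'I_dB) * 'I_dB) * ((('I_dC * 'I_dC) * 'I_dB) * 'I_dB)) :=
  let: ((((c1, c0), b1), b0), (((c3, c2), b3), b2)) := w in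
  (((((((b0, b1), b2), b3), c0), c1), c2), c3).
pose k (l : ((((((('I_dB * 'I_dB) * 'I_dB) * 'I_dB) * 'I_dC) * 'I_dC) * 'I_dC) * 'I_dC)) :=
  let: (((((((b0, b1), b2), b3), c0), c1), c2), c3) := l in
  ((((c1, c0), b1), b0), (((c3, c2), b3), b2)).
rewrite (reindex h); last first.
  exists k => x _.
    by case: x => [[[[c1 c0] b1] b0] [[[c3 c2] b3] b2]].
  by case: x => [[[[[[[b0 b1] b2] b3] c0] c1] c2] c3].
apply: eq_bigr => -[[[[c1 c0] b1] b0] [[[c3 c2] b3] b2]] _ /=.
rewrite !rmorphM /= !conjcK; ring.
Qed.

Lemma Z_trHH : Z Psi = \tr ((Vm *m Vm^t*) *m (Vm *m Vm^t*)).
Proof.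
rewrite Z_expand trHH; do 4 (apply: eq_bigr => ? _); exact: per_a.
Qed.

Lemma trH_hf : \tr (Vm *m Vm^t*) = \sum_j \sum_k hf (j, k) (j, k).
Proof.
rewrite /mxtrace; under eq_bigr => p _ do rewrite H_pq.
by rewrite (@sum_ev _ (fun x => hf x x)) sum_pair.
Qed.

Lemma trB_H : \tr (rhoB Psi *m rhoB Psi) = \tr (Vm *m Vm^t*).
Proof.
rewrite trH_hf; under [RHS]eq_bigr => j _ do under eq_bigr => k _ do rewrite hf_expand.
rewrite /mxtrace.
have E : forall B, (rhoB Psi *m rhoB Psi) B B = \sum_B' rhoB Psi B B' * rhoB Psi B' B.
  by move=> B; rewrite mxE.
rewrite (eq_bigr _ (fun B _ => E B)).
have E2 : forall B B', rhoB Psi B B' * rhoB Psi B' B =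
  \sum_(u : 'I_dA * 'I_dC) \sum_(v : 'I_dA * 'I_dC)
    (Psi u.1 B u.2 * conjc (Psi u.1 B' u.2)) * (Psi v.1 B' v.2 * conjc (Psi v.1 B v.2)).
  move=> B B'; rewrite -big_distrlr /rhoB !mxE.
  by rewrite (pair_bigA _ (fun a c => Psi a B c * _)) (pair_bigA _ (fun a c => Psi a B' c * _)).
rewrite (eq_bigr _ (fun B _ => eq_bigr _ (fun B' _ => E2 B B'))).
rewrite !pair_bigA /=.
pose h (w : ((((('I_dA * 'I_dA) * 'I_dC) * 'I_dC) * 'I_dB) * 'I_dB)) :=
  let: (((((j, k), c), c'), b), b') := w in (((b', b), (j, c)), (k, c')).
pose g (l : ((('I_dB * 'I_dB) * ('I_dA * 'I_dC)) * ('I_dA * 'I_dC))) :=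
  let: (((b', b), (j, c)), (k, c')) := l in (((((j, k), c), c'), b), b').
rewrite (reindex h); last first.
  exists g => x _.
    by case: x => [[[[[j k] c] c'] b] b'].
  by case: x => [[[b' b] [j c]] [k c']].
apply: eq_bigr => -[[[[[j k] c] c'] b] b'] _ /=.
rewrite !rmorphM /= !conjcK; ring.
Qed.

Definition Pm : 'M[C]_(dA, #|{: 'I_dB * 'I_dC}|) :=
  \matrix_(j, q) Psi j (enum_val q).1 (enum_val q).2.

Lemma rhoA_Pm : rhoA Psi = Pm *m Pm^t*.
Proof.
apply/matrixP => a a'; rewrite /rhoA !mxE.
under [RHS]eq_bigr => q _ do rewrite !mxE.
by rewrite (@sum_ev _ (fun q => Psi a q.1 q.2 * conjc (Psi a' q.1 q.2))) sum_pair.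
Qed.

Lemma rank_rhoA : \rank (rhoA Psi) = \rank Pm.
Proof. by rewrite rhoA_Pm rank_MMt. Qed.

Lemma rank_Vm : (\rank Vm <= \rank Pm * \rank Pm)%N.
Proof.
set r := \rank Pm.
set E := row_base Pm.
set be := Pm *m pinvmx E.
have PE : Pm = be *m E by rewrite /be mulmxKpV // eq_row_base.
pose Ef s b c := E s (enum_rank (b, c)).
have PsiE : forall j b c, Psi j b c = \sum_s be j s * Ef s b c.
  move=> j b c.
  have := congr1 (fun M : 'M[C]_(dA, #|{: 'I_dB * 'I_dC}|) => M j (enum_rank (b, c))) PE => /=.
  by rewrite [in X in X = _]mxE enum_rankK /= mxE.
pose W : 'M[C]_(#|{: 'I_r * 'I_r}|, #|{: 'I_dC * 'I_dC}|) :=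
  \matrix_(u, m) (\sum_b conjc (Ef (enum_val u).1 b (enum_val m).1) *
                        Ef (enum_val u).2 b (enum_val m).2).
pose G : 'M[C]_(#|{: 'I_dA * 'I_dA}|, #|{: 'I_r * 'I_r}|) :=
  \matrix_(p, u) (conjc (be (enum_val p).1 (enum_val u).1) * be (enum_val p).2 (enum_val u).2).
have VGW : Vm = G *m W.
  have Gpu : forall p u, G p u = conjc (be (enum_val p).1 (enum_val u).1) * be (enum_val p).2 (enum_val u).2.
    by move=> p u; rewrite mxE.
  have Wum : forall u m, W u m = \sum_b conjc (Ef (enum_val u).1 b (enum_val m).1) *
                        Ef (enum_val u).2 b (enum_val m).2.
    by move=> u m; rewrite mxE.
  apply/matrixP => p m; rewrite [LHS]mxE [RHS]mxE /Xf.
  rewrite (eq_bigr _ (fun u _ => congr2 *%R (Gpu p u) (Wum u m))).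
  rewrite (@sum_ev _ (fun u => conjc (be (enum_val p).1 u.1) * be (enum_val p).2 u.2 *
     \sum_b conjc (Ef u.1 b (enum_val m).1) * Ef u.2 b (enum_val m).2)).
  rewrite sum_pair /=.
  under eq_bigr => b _ do rewrite !PsiE rmorph_sum big_distrlr /=.
  rewrite exchange_big /=; apply: eq_bigr => s _.
  rewrite exchange_big /=; apply: eq_bigr => t _.
  rewrite big_distrr /=; apply: eq_bigr => b _.
  rewrite rmorphM; ring.
rewrite VGW (leq_trans (mxrankM_maxr _ _)) // (leq_trans (rank_leq_row _)) //.
by rewrite card_prod card_ord.
Qed.

Lemma trH_pos : normalized Psi -> 0 < \tr (Vm *m Vm^t*).
Proof.
move=> hn.
have ge0 : 0 <= \tr (Vm *m Vm^t*).
  by rewrite trH_eq; apply: sumr_ge0 => i _; apply: sumr_ge0 => j _; exact: mul_conjC_ge0.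
rewrite lt_def ge0 andbT; apply/eqP => H0.
have V0 : forall p m, Vm p m = 0.
  move=> p m; move: H0; rewrite trH_eq => H0.
  have Hnn : forall i : 'I_#|{: 'I_dA * 'I_dA}|, true -> 0 <= \sum_j Vm i j * (Vm i j)^*.
    by move=> i _; apply: sumr_ge0 => j _; exact: mul_conjC_ge0.
  have H1 := @psumr_eq0P _ _ _ _ Hnn H0 p isT.
  have := @psumr_eq0P _ _ _ _ (fun j _ => mul_conjC_ge0 (Vm p j)) H1 m isT.
  by move/eqP; rewrite mul_conjC_eq0 => /eqP.
have P0 : forall j b c, Psi j b c = 0.
  move=> j b c.
  have := V0 (enum_rank (j, j)) (enum_rank (c, c)).
  rewrite mxE !enum_rankK /Xf /= => H1.
  have Hnn : forall b : 'I_dB, true -> 0 <= conjc (Psi j b c) * Psi j b c.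
    by move=> b' _; rewrite mulrC; exact: mul_conjC_ge0.
  have := @psumr_eq0P _ _ _ _ Hnn H1 b isT.
  by rewrite mulrC => /eqP; rewrite mul_conjC_eq0 => /eqP.
move: hn; rewrite /normalized.
rewrite big1 => [/eqP|a _]; first by rewrite eq_sym oner_eq0.
rewrite big1 // => b _; rewrite big1 // => c _.
by rewrite P0 mul0r.
Qed.

Local Open Scope complex_scope.
Local Open Scope ring_scope.
Lemma main_aux : normalized Psi -> G Psi <= S0A Psi + S2B Psi.
Proof.
move=> hn.
have tpos := trH_pos hn.
set t := \tr (Vm *m Vm^t*) in tpos.
have hML := @ML _ _ _ Vm.
rewrite -/t -Z_trHH in hML.
have Zge0 : 0 <= Z Psi by rewrite Z_trHH; exact: trHH_ge0.
have rk := rank_Vm; rewrite -rank_rhoA in rk.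
set n := \rank (rhoA Psi) in rk.
set z := complex.Re (Z Psi).
set tr := complex.Re t.
have Zz : Z Psi = z%:C by rewrite RRe_real // ger0_real.
have Tt : t = tr%:C by rewrite RRe_real // ger0_real // ltW.
have trpos : 0 < tr by rewrite -ltcR -Tt.
have zge0 : 0 <= z by rewrite -lecR -Zz.
rewrite Zz Tt -rmorphXn -(rmorph_nat (real_complex R)) -rmorphM lecR in hML.
have hn2 : tr ^+ 2 <= n%:R ^+ 2 * z.
  apply: (le_trans hML); apply: ler_wpM2r => //.
  by rewrite -natrX ler_nat expnS expn1.
have nz : 0 < n%:R ^+ 2 * z by apply: lt_le_trans hn2; exact: exprn_gt0.
have zpos : 0 < z.
  rewrite lt_def zge0 andbT; apply/eqP => z0; move: nz; by rewrite z0 mulr0 ltxx.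
have npos : 0 < (n%:R : R).
  rewrite lt_def ler0n andbT; apply/eqP => n0; move: nz; by rewrite n0 expr0n /= mul0r ltxx.
have hl : ln (tr ^+ 2) <= ln (n%:R ^+ 2 * z).
  by rewrite ler_ln // posrE ?exprn_gt0 ?mulr_gt0.
rewrite lnM ?posrE ?exprn_gt0 // !lnXn // in hl.
rewrite /G /S0A /S2B -/z -/n trB_H -/t -/tr.
rewrite !mulr2n in hl.
lra.
Qed.

End Main.

Theorem mainTheorem4 (R : realType) (dA dB dC : nat) (Psi : state R dA dB dC) :
  normalized Psi -> G Psi <= S0A Psi + S2B Psi.
Proof. exact: main_aux. Qed.
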